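(* Let $G$ be a threshold graph with $s=\mathrm{seq}(G)$, and suppose $s$ contains at least two ones. Then the length $\psi(G)$ of a longest cycle in $G$ is $$\psi(G)=r(s)+1-h(s'),$$ where $s'=s_1s_2\cdots s_{r(s)-1}$.
   Context: A threshold graph on $n\ge1$ vertices is built from a base vertex $v_0$ by successively adding $v_1,\dots,v_{n-1}$, each either isolated (adjacent to no earlier vertex) or dominating (adjacent to all earlier vertices); its creation sequence $\mathrm{seq}(G)=s_1\cdots s_{n-1}$ has $s_i=1$ if $v_i$ is dominating and $s_i=0$ otherwise. For a binary string $s=s_1\cdots s_m$: $r(s)=\max(\{0\}\cup\{i: s_i=1\})$ (index of the right-most one, or $0$); for $0\le k\le m$ the $k$-th tail is $s_{m-k+1}\cdots s_m$ (empty for $k=0$), $z_k(s)$, $u_k(s)$ are its numbers of zeros and ones, and $h(s)=\max_{0\le k\le m}\{z_k(s)-u_k(s)\}$. *)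

(* Defs.v *)
From mathcomp Require Import all_boot all_order all_algebra.
Set Implicit Arguments. Unset Strict Implicit. Unset Printing Implicit Defensive.
Import Order.TTheory GRing.Theory Num.Theory.

(* Threshold graph with creation sequence s = s_1 ... s_m (s_i = nth false s (i-1)),
   on the n = m+1 vertices v_0,...,v_m, represented as 'I_(size s).+1.
   For i < j, v_i ~ v_j iff v_j is dominating, i.e. s_j = 1. *)
Definition tadj (s : seq bool) : rel 'I_(size s).+1 :=
  fun i j => ((i < j)%N && nth false s (j.-1)) || ((j < i)%N && nth false s (i.-1)).

Arguments tadj : clear implicits.

Definition graph_cycle (T : eqType) (e : rel T) (c : seq T) : Prop :=
  [/\ (3 <= size c)%N, uniq c & cycle e c].

Definition longest_cycle_length (T : eqType) (e : rel T) (k : nat) : Prop :=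
  (exists c, graph_cycle e c /\ size c = k) /\
  (forall c, graph_cycle e c -> (size c <= k)%N).

(* r(s): index (1-based) of the right-most one, or 0. *)
Definition rmost (s : seq bool) : nat :=
  \max_(i < size s | nth false s i) i.+1.

Definition tailk (s : seq bool) (k : nat) : seq bool := drop (size s - k) s.
Definition zk (s : seq bool) (k : nat) : nat := count negb (tailk s k).
Definition uk (s : seq bool) (k : nat) : nat := count id (tailk s k).

Definition hval (s : seq bool) : int :=
  \big[Num.max/0%R]_(k < (size s).+1) ((zk s k)%:Z - (uk s k)%:Z)%R.

(* Main.v *)
Require Import Defs.
From mathcomp Require Import all_boot all_order all_algebra zify.
Import Order.TTheory GRing.Theory Num.Theory.

Definition Qf (t : seq bool) : nat :=
  foldl (fun q (b : bool) => if b then q.-1 else q.+1) 0 t.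

Lemma Qf_rcons t b : Qf (rcons t b) = if b then (Qf t).-1 else (Qf t).+1.
Proof. by rewrite /Qf foldl_rcons. Qed.

Lemma count_rcons' (T : Type) (a : pred T) t x :
  count a (rcons t x) = count a t + a x.
Proof. by rewrite -cats1 count_cat /= addn0. Qed.

Lemma tailk0 t : tailk t 0 = [::].
Proof. by rewrite /tailk subn0 drop_size. Qed.

Lemma tailk_rcons t b k : k <= size t ->
  tailk (rcons t b) k.+1 = rcons (tailk t k) b.
Proof.
move=> hk; rewrite /tailk size_rcons subSS drop_rcons //; lia.
Qed.

Lemma Qf_ge t k : k <= size t -> zk t k <= uk t k + Qf t.
Proof.
elim/last_ind: t k => [|t b IH] k.
  by rewrite leqn0 => /eqP ->; rewrite /zk tailk0.
case: k => [|k]; first by rewrite /zk tailk0.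
rewrite size_rcons ltnS => hk.
rewrite /zk /uk tailk_rcons // !count_rcons' Qf_rcons.
have := IH _ hk; rewrite /zk /uk.
case: b => /=; lia.
Qed.

Lemma Qf_att t : exists k, k <= size t /\ zk t k = uk t k + Qf t.
Proof.
elim/last_ind: t => [|t b [k [hk IH]]].
  by exists 0; rewrite /zk /uk tailk0.
case: b.
  case E: (Qf t) => [|q].
    by exists 0; rewrite Qf_rcons E /zk /uk tailk0.
  exists k.+1; rewrite size_rcons ltnS hk; split => //.
  move: IH; rewrite /zk /uk tailk_rcons // !count_rcons' Qf_rcons E /=; lia.
exists k.+1; rewrite size_rcons ltnS hk; split => //.
move: IH; rewrite /zk /uk tailk_rcons // !count_rcons' Qf_rcons /=; lia.
Qed.

Lemma Qf_has t : Qf t + has id t <= size t.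
Proof.
elim/last_ind: t => [|t b IH] //.
rewrite Qf_rcons has_rcons size_rcons; case: b => /=; lia.
Qed.

Lemma hval_Qf t : hval t = Posz (Qf t).
Proof.
apply/eqP; rewrite eq_le; apply/andP; split.
  rewrite /hval; apply: bigmax_le => // i _.
  have h := @Qf_ge t i (ltn_ord i).
  rewrite lerBlDr -PoszD lez_nat; lia.
have [k [hk E]] := Qf_att t.
rewrite /hval.
have hk' : k < (size t).+1 by [].
apply: le_trans (le_bigmax _ _ (Ordinal hk')) => /=.
rewrite E PoszD addrC addKr //.
Qed.

Definition adjn (s : seq bool) : rel nat :=
  fun i j => ((i < j)%N && nth false s (j.-1)) || ((j < i)%N && nth false s (i.-1)).

Lemma path_exists s j : j <= size s ->
  exists x p, [/\ path (adjn s) x p, uniq (x :: p),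
     all (fun v => v <= j) (x :: p) & size p + Qf (take j s) = j].
Proof.
elim: j => [|j IH] hj.
  by exists 0, [::]; rewrite take0.
have [x [p [hp hu ha hs]]] := IH (ltnW hj).
rewrite (take_nth false hj) Qf_rcons.
set q := Qf (take j s) in hs *.
have ha' : all (fun v => v <= j.+1) (x :: p).
  by apply: sub_all ha => v /= h; apply: leqW.
have nj : j.+1 \notin x :: p.
  by apply/negP => /(allP ha) /=; rewrite ltnn.
case b: (nth false s j); last first.
  by exists x, p; split => //; lia.
have adjl : forall v, v <= j -> adjn s v j.+1.
  by move=> v hv; rewrite /adjn /= ltnS hv b.
case: q hs => [|q] hs.
  exists x, (rcons p j.+1); split.
  - rewrite rcons_path hp adjl //.
    by apply: (allP ha); apply: mem_last.
  - by rewrite -rcons_cons rcons_uniq nj hu.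
  - rewrite -rcons_cons all_rcons /= leqnn /=; exact: ha'.
  - rewrite size_rcons /=; lia.
have : has (predC (mem (x :: p))) (iota 0 j.+1).
  apply/negPn/negP; rewrite -all_predC => /allP hall.
  have : size (iota 0 j.+1) <= size (x :: p).
    apply: uniq_leq_size; first exact: iota_uniq.
    by move=> v /hall /= /negPn.
  rewrite size_iota /=; lia.
case/hasP => v; rewrite mem_iota add0n /= => hv vn.
exists x, (p ++ [:: j.+1; v]); split.
- rewrite cat_path hp /= adjl ?(allP ha) ?mem_last //= /adjn hv b /= andbT.
  by apply/orP; right.
- suff : uniq ((x :: p) ++ [:: j.+1; v]) by [].
  rewrite cat_uniq hu /= (negbTE nj) (negbTE vn) /= inE andbT.
  by apply/eqP => E; rewrite E ltnn in hv.
- suff : all (fun v => v <= j.+1) ((x :: p) ++ [:: j.+1; v]) by [].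
  rewrite all_cat ha' /= leqnn /=; lia.
- rewrite size_cat /=; lia.
Qed.
Set Implicit Arguments.

Lemma path_zip (T : Type) (e : rel T) x p :
  path e x p = all (fun q => e q.1 q.2) (zip (x :: p) p).
Proof. by elim: p x => [|y p IH] x //=; rewrite IH. Qed.

Lemma cycle_zip (T : Type) (e : rel T) c :
  cycle e c = all (fun q => e q.1 q.2) (zip c (rot 1 c)).
Proof.
case: c => [|x t] //; rewrite rot1_cons /= path_zip.
have -> : x :: rcons t x = (x :: t) ++ [:: x] by rewrite -cats1.
by rewrite -[rcons t x]cats0 zip_cat ?cats0 // size_rcons.
Qed.

Lemma path_keep (T : Type) (S : pred T) x p :
  path (fun a b => ~~ S a ==> ~~ S b) x p -> ~~ S x -> all (predC S) p.
Proof.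
elim: p x => [|y p IH] x //= /andP [/implyP h hp] hx.
by rewrite (h hx) /=; apply: (IH y hp); exact: h hx.
Qed.

Lemma cross (T : eqType) (S : pred T) c : has S c -> has (predC S) c ->
  has (fun q => ~~ S q.1 && S q.2) (zip c (rot 1 c)).
Proof.
move=> hS /hasP [y yc nSy]; apply: contraT => H.
have hc : cycle (fun a b => ~~ S a ==> ~~ S b) c.
  rewrite cycle_zip; apply/allP => q qin; apply/implyP => h1.
  apply/negP => h2; apply: (negP H); apply/hasP; exists q => //; by rewrite h1 h2.
case: (rot_to yc) => i t E.
move: hc; rewrite -(rot_cycle i) E /= => hp.
have := @path_keep _ S _ _ hp nSy; rewrite all_rcons nSy /= => ht.
move: hS; rewrite -(has_rot i) E /= (negbTE nSy) /=.
by move/hasP => [w wt Sw]; move: (allP ht w wt); rewrite /= Sw.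
Qed.

Lemma count_lt (T : Type) (P Q : pred T) l : (forall x, P x -> Q x) ->
  has (fun x => Q x && ~~ P x) l -> count P l < count Q l.
Proof.
move=> hPQ; elim: l => [|x l IH] //=.
case/orP => [/andP [-> /negbTE ->]|/IH h].
  by rewrite add0n add1n ltnS; apply: sub_count.
case: (boolP (P x)) => px; first by rewrite (hPQ _ px) /= add1n ltnS.
rewrite add0n; apply: leq_trans h _; exact: leq_addl.
Qed.

Lemma count3 (T : Type) (P1 P2 P3 : pred T) l :
  (forall x, P1 x + P2 x + P3 x = 1) ->
  size l = count P1 l + count P2 l + count P3 l.
Proof.
move=> h; elim: l => [|x l IH] //=; have := h x; rewrite IH; lia.
Qed.

Lemma count_uniq_sub (T : eqType) (P : pred T) c l :
  uniq c -> (forall x, x \in c -> P x -> x \in l) -> count P c <= size l.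
Proof.
move=> hu hs; rewrite -size_filter; apply: uniq_leq_size; first exact: filter_uniq.
by move=> x; rewrite mem_filter => /andP [px xc]; apply: hs.
Qed.
Set Implicit Arguments.

Lemma rmost_ge s i : nth false s i -> i < rmost s.
Proof.
case: (ltnP i (size s)) => hi; last by rewrite nth_default.
move=> h; exact: (@leq_bigmax_cond _ (fun j : 'I_(size s) => nth false s j)
   (fun j : 'I_(size s) => j.+1) (Ordinal hi) h).
Qed.

Lemma rmost_pos s : has id s ->
  [/\ 0 < rmost s, nth false s (rmost s).-1 & rmost s <= size s].
Proof.
move=> /(has_nthP false) [i hi hn].
have hA : 0 < #|(fun j : 'I_(size s) => nth false s j)|.
  apply/card_gt0P; exists (Ordinal hi); by rewrite /in_mem /=.
have [j hj E] := @eq_bigmax_cond _ (fun j : 'I_(size s) => nth false s j)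
   (fun j : 'I_(size s) => j.+1) hA.
have -> : rmost s = j.+1 by rewrite -E.
by split => //=; move: hj; rewrite /in_mem /=.
Qed.

Lemma upper s c k : has id s -> k <= (rmost s).-1 -> uniq c -> cycle (adjn s) c ->
  size c <= (rmost s - k) + 2 * count (fun v => nth false s v.-1) (iota (rmost s - k) k) + 1.
Proof.
move=> hs hk hu hc.
have [r0 rn rsz] := rmost_pos s hs.
set r := rmost s in hk r0 rn rsz *.
set m := r - k.
set D := fun v => nth false s v.-1.
set u := count D (iota m k).
have m0 : 0 < m by rewrite /m; lia.
have Dle : forall v, 0 < v -> D v -> v <= r.
  move=> v v0 /(rmost_ge s); rewrite -/r; lia.
set Z := zip c (rot 1 c).
have hall : all (fun q => adjn s q.1 q.2) Z by rewrite -cycle_zip.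
have U1 : unzip1 Z = c by rewrite unzip1_zip // size_rot.
have U2 : unzip2 Z = rot 1 c by rewrite unzip2_zip // size_rot.
have hle : all (fun v => v <= r) c.
  rewrite -U1 all_map; apply: sub_all hall => -[x y] /=.
  rewrite /adjn => /orP [/andP [hxy hy]|/andP [hyx hx]].
    have := Dle y (leq_ltn_trans (leq0n x) hxy) hy; lia.
  exact: Dle x (leq_ltn_trans (leq0n y) hyx) hx.
set Low := fun v => v < m.
set A := fun v => (m <= v) && ~~ D v.
set B := fun v => (m <= v) && D v.
have hsize : size c = count Low c + count A c + count B c.
  apply: count3 => v; rewrite /Low /A /B; case: (ltnP v m) => h /=;
    case: (D v) => //=.
have hL : count Low c <= m.
  rewrite -[X in _ <= X](size_iota 0 m); apply: count_uniq_sub => // v _.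
  by rewrite mem_iota.
have hB : count B c <= u + 1.
  have -> : u + 1 = size (filter D (iota m (k + 1))).
    rewrite size_filter iotaD count_cat /= addn0 -/u.
    have -> : D (m + k) = true by rewrite /D /m subnK; [exact: rn|lia].
    by [].
  apply: count_uniq_sub => // v vc /andP [mv Dv].
  rewrite mem_filter Dv mem_iota mv /=.
  have := allP hle v vc; rewrite /= /m; lia.
have hAB1 : count A c = count (fun q => A q.1 && adjn s q.1 q.2) Z.
  rewrite -{1}U1 count_map; apply: eq_in_count => q qZ /=.
  by rewrite (allP hall q qZ) andbT.
have hAB2 : count B c = count (fun q => B q.2) Z.
  have -> : count (fun q => B q.2) Z = count B (unzip2 Z) by rewrite count_map.
  rewrite U2.
  have hp : perm_eq (rot 1 c) c by rewrite perm_rot.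
  by rewrite (permP hp).
have hsub : forall q, (A q.1 && adjn s q.1 q.2) -> B q.2.
  move=> [x y] /= /andP [/andP [mx nDx]].
  have nDx' : nth false s x.-1 = false by apply/negbTE.
  rewrite /adjn nDx' andbF orbF.
  move=> /andP [hxy Dy]; apply/andP; split; [lia|exact: Dy].
have hAB : count A c <= count B c.
  rewrite hAB1 hAB2; exact: sub_count.
case: (boolP (has (fun v => m <= v) c)) => hS; last first.
  have hA0 : count A c = 0.
    apply/eqP; rewrite -leqn0.
    apply: leq_trans (@sub_count _ A (fun v => m <= v) _ c) _.
      by move=> v /andP [].
    by rewrite leqn0 eqn0Ngt -has_count.
  have hB0 : count B c = 0.
    apply/eqP; rewrite eqn0Ngt -has_count; apply: contra hS => /hasP [v vc /andP [mv _]].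
    by apply/hasP; exists v.
  rewrite hsize hA0 hB0; lia.
case: (boolP (has (predC (fun v => m <= v)) c)) => hS'; last first.
  have hL0 : count Low c = 0.
    apply/eqP; rewrite eqn0Ngt -has_count; apply: contra hS' => /hasP [v vc hv].
    by apply/hasP; exists v => //=; rewrite -ltnNge.
  rewrite hsize hL0; lia.
have hlt : count A c < count B c.
  rewrite hAB1 hAB2; apply: count_lt => //.
  have := @cross _ _ c hS hS'; rewrite -/Z => /hasP [[x y] qZ /= /andP [hx hy]].
  apply/hasP; exists (x, y) => //=.
  have hAx : A x = false by rewrite /A (negbTE hx).
  rewrite hAx /= andbT /B hy /=.
  have := allP hall _ qZ; rewrite /= /adjn => /orP [/andP [_ Dy]|/andP [hyx _]].
    exact: Dy.
  move: hx hy; rewrite -ltnNge => hx hy; lia.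
rewrite hsize; lia.
Qed.

Lemma zu t : count negb t + count id t = size t.
Proof. by elim: t => [|[] t IH] //=; rewrite -IH; lia. Qed.

Lemma tail_eq s r k : 0 < r -> r <= size s -> k <= r.-1 ->
  tailk (take r.-1 s) k = map (fun v => nth false s v.-1) (iota (r - k) k).
Proof.
move=> r0 rs hk.
have hsz : size (take r.-1 s) = r.-1 by rewrite size_take; case: ltnP => //; lia.
apply: (@eq_from_nth _ false).
  by rewrite /tailk size_drop hsz size_map size_iota; lia.
move=> i; rewrite /tailk size_drop hsz => hi.
rewrite nth_drop nth_take; last lia.
rewrite (nth_map 0) ?size_iota; last lia.
rewrite nth_iota; last lia.
congr nth; lia.
Qed.

Unset Implicit Arguments.

Theorem mainTheorem9 (s : seq bool) :
  (2 <= count id s)%N ->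
  exists k : nat, longest_cycle_length (tadj s) k /\
    (k%:Z = ((rmost s).+1)%:Z - hval (take (rmost s).-1 s))%R.
Proof.
move=> h2.
have hs : has id s by rewrite has_count; lia.
have [r0 rn rsz] := rmost_pos s hs.
set r := rmost s in r0 rn rsz *.
set s' := take r.-1 s.
have hs' : has id s'.
  rewrite has_count.
  have hz : count id (drop r s) = 0.
    apply/eqP; rewrite eqn0Ngt -has_count; apply/negP => /(has_nthP false) [i hi].
    rewrite nth_drop => /(rmost_ge s); rewrite -/r; lia.
  have := h2; rewrite -(cat_take_drop r.-1 s) count_cat -/s'.
  rewrite (drop_nth false); last lia.
  have -> : r.-1.+1 = r by lia.
  rewrite /= rn hz; lia.
have hQ := Qf_has s'; rewrite hs' size_take in hQ.
have hQ' : Qf s' + 1 <= r.-1 by move: hQ; case: ltnP => h; lia.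
have [x [p [hp hu ha hsz]]] := @path_exists s r.-1 (leq_trans (leq_pred r) rsz).
rewrite -/s' in hsz.
exists (size p + 2); split; last first.
  rewrite hval_Qf; lia.
have rnot : r \notin x :: p.
  by apply/negP => /(allP ha) /=; lia.
split.
  set cn := [:: r, x & p].
  have hcn : all (fun v => v < (size s).+1) cn.
    rewrite /cn /= ltnS rsz /=; apply: sub_all ha => v /=; lia.
  exists (map (@inord (size s)) cn).
  have hmap : map val (map (@inord (size s)) cn) = cn.
    rewrite -map_comp -[RHS]map_id; apply/eq_in_map => v /(allP hcn) hv /=.
    exact: inordK.
  split; last by rewrite size_map /cn /=; lia.
  split.
  - by rewrite size_map /cn /=; lia.
  - by rewrite -(map_inj_uniq val_inj) hmap /cn; rewrite cons_uniq rnot hu.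
  - change (cycle (relpre val (adjn s)) (map (@inord (size s)) cn)).
    rewrite -cycle_map hmap /cn /= rcons_path hp /=.
    apply/andP; split.
      rewrite /adjn; apply/orP; right; apply/andP; split => //.
      have := allP ha x (mem_head _ _); lia.
    rewrite /adjn; apply/orP; left; apply/andP; split => //.
    have := allP ha _ (mem_last x p) => h; apply: (leq_ltn_trans h); by rewrite ltn_predL.
move=> c [c3 cu cc].
have cu' : uniq (map val c) by rewrite (map_inj_uniq val_inj).
have cc' : cycle (adjn s) (map val c) by rewrite cycle_map.
have [k [hk E]] := Qf_att s'.
rewrite size_take in hk.
have hk' : k <= r.-1 by move: hk; case: ltnP => h; lia.
have := @upper s _ k hs hk' cu' cc'; rewrite -/r size_map.
have hzu := zu (tailk s' k).
have hT := @tail_eq s r k r0 rsz hk'.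
have hU : uk s' k = count (fun v => nth false s v.-1) (iota (r - k) k).
  by rewrite /uk hT count_map.
have hK : size (tailk s' k) = k by rewrite hT size_map size_iota.
move: hzu; rewrite hK -/(zk s' k) -/(uk s' k) E hU.
move: hsz hQ'; set Q := Qf s'; set u := count _ (iota (r - k) k).
move=> h1 h3 h4 h5; move: h1 h3 h4 h5 hk' r0; move: (size c) (size p) => a b; clear; lia.
Qed.
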